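(* Let $N_7$ be the connected, simply connected nilpotent Lie group with Lie algebra $\mathfrak{n}_7$ spanned by $X_1,\dots,X_7$ with non-trivial brackets $[X_1,X_3]=X_5,\ [X_1,X_4]=X_6,\ [X_1,X_5]=X_7,\ [X_2,X_3]=-X_6,\ [X_2,X_4]=X_5,\ [X_2,X_6]=X_7$. Let $\Gamma_2\subset\mathfrak{n}_7^*/N_7$ be the set of coadjoint orbits of linear functionals $f=\sum_i f_iX_i^*$ with $f_7\neq 0$. Then $\Gamma_2$, with the relative topology of the orbit space $\mathfrak{n}_7^*/N_7$ (quotient topology), is Hausdorff, and $\Gamma_2$ is homeomorphic to $\mathbb R^2\times\mathbb R^*$ via $(f_3,f_4,f_7)\mapsto \mathcal O_{(f_3,f_4,f_7)}$.
   Context: $N_7$ acts on $\mathfrak{n}_7^*$ by the coadjoint action $\mathrm{Ad}^*(g)f=f\circ\mathrm{Ad}(g^{-1})$; $X_1^*,\dots,X_7^*$ is the dual basis. For $f_7\neq0$, every coadjoint orbit with $X_7^*$-coordinate $f_7$ contains exactly one functional of the form $f_3X_3^*+f_4X_4^*+f_7X_7^*$, and $\mathcal O_{(f_3,f_4,f_7)}$ denotes the orbit of this functional; explicitly $\mathcal O_{(f_3,f_4,f_7)}=\{(x_1,x_2,f_3+\frac{x_5^2-x_6^2}{2f_7},f_4+\frac{x_5x_6}{f_7},x_5,x_6,f_7): x_1,x_2,x_5,x_6\in\mathbb R\}$ in coordinates with respect to $X_1^*,\dots,X_7^*$. *)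

(* Defs.v *)
From HB Require Import structures.
From mathcomp Require Import all_boot all_order all_algebra.
From mathcomp Require Import all_classical all_reals all_analysis.
Set Implicit Arguments. Unset Strict Implicit. Unset Printing Implicit Defensive.
Import Order.TTheory GRing.Theory Num.Theory.
Import numFieldNormedType.Exports.
Local Open Scope classical_set_scope.
Local Open Scope ring_scope.

(* Coordinates: index i : 'I_7 (0-based) corresponds to X_{i+1} (resp. X_{i+1}^* ).
   Elements of n7 and of n7^* are both represented as row vectors 'rV[R]_7;
   a functional f acts on Y by  pairing f Y = \sum_i f_i Y_i. *)

Section N7.
Variable R : realType.
Notation V := 'rV[R]_7.

Definition i7 (k : nat) : 'I_7 := inord k.

Definition n7_bracket (x y : V) : V :=
  \row_(k < 7)
    (if val k == 4%N then
       x 0 (i7 0) * y 0 (i7 2) - x 0 (i7 2) * y 0 (i7 0)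
     + (x 0 (i7 1) * y 0 (i7 3) - x 0 (i7 3) * y 0 (i7 1))
     else if val k == 5%N then
       x 0 (i7 0) * y 0 (i7 3) - x 0 (i7 3) * y 0 (i7 0)
     - (x 0 (i7 1) * y 0 (i7 2) - x 0 (i7 2) * y 0 (i7 1))
     else if val k == 6%N then
       x 0 (i7 0) * y 0 (i7 4) - x 0 (i7 4) * y 0 (i7 0)
     + (x 0 (i7 1) * y 0 (i7 5) - x 0 (i7 5) * y 0 (i7 1))
     else 0).

(* Ad(exp X) Y = exp(ad X) Y = \sum_k (ad X)^k Y / k!  (finite: n7 is nilpotent). *)
Definition Ad_exp (x y : V) : V :=
  \sum_(k < 7) ((k`!)%:R)^-1 *: iter k (n7_bracket x) y.

Definition pairing (f y : V) : R := \sum_(i < 7) f 0 i * y 0 i.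

(* Coadjoint action of g = exp X :  Ad^*(g) f = f o Ad(g^{-1}) = f o Ad(exp(-X)). *)
Definition coadjoint (x f : V) : V :=
  \row_(j < 7) pairing f (Ad_exp (- x) (delta_mx 0 j)).

(* Coadjoint orbit of f (exp : n7 -> N7 is onto since N7 is connected,
   simply connected and nilpotent). *)
Definition coad_orbit (f : V) : set V := [set g | exists x : V, g = coadjoint x f].

(* The orbit space n7^*/N7 as the set of coadjoint orbits, with the quotient
   topology: a family U of orbits is open iff its preimage under the
   canonical projection f |-> coad_orbit f is open in n7^*. *)
Definition orbit_space : set (set V) := [set O | exists f : V, O = coad_orbit f].

Definition orbit_open (U : set (set V)) : Prop :=
  U `<=` orbit_space /\ open [set f : V | U (coad_orbit f)].

Definition Gamma2 : set (set V) :=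
  [set O | exists f : V, f 0 (i7 6) != 0 /\ O = coad_orbit f].

Definition Gamma2_open (W : set (set V)) : Prop :=
  exists U, orbit_open U /\ W = U `&` Gamma2.

Definition std_functional (p : R * R * R) : V :=
  \row_(k < 7) (if val k == 2%N then p.1.1 else if val k == 3%N then p.1.2
                else if val k == 6%N then p.2 else 0).

Definition Phi (p : R * R * R) : set V := coad_orbit (std_functional p).

Definition dom_R2Rstar : set (R * R * R) := [set p | p.2 != 0].

Definition dom_open (A : set (R * R * R)) : Prop :=
  exists B : set (R * R * R), open B /\ A = B `&` dom_R2Rstar.

End N7.

(* Main.v *)
Require Import Defs.
From HB Require Import structures.
From mathcomp Require Import all_boot all_order all_algebra.
From mathcomp Require Import all_classical all_reals all_analysis.
From mathcomp Require Import ring lra.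
Import Order.TTheory GRing.Theory Num.Theory.
Import numFieldNormedType.Exports.
Local Open Scope classical_set_scope.
Local Open Scope ring_scope.

Lemma i7v k : (k < 7)%N -> val (i7 k) = k.
Proof. by move=> H; exact: (@inordK 6 k H). Qed.

Lemma i7eq k m : (k < 7)%N -> (m < 7)%N -> (i7 k == i7 m) = (k == m).
Proof. by move=> ??; rewrite -val_eqE /= !i7v. Qed.

Section Alg.
Variable R : realType.
Notation V := 'rV[R]_7.

Lemma br0 (x : V) : n7_bracket x 0 = 0.
Proof.
apply/rowP => k; rewrite !mxE.
by case: ifP => _; [ring|case: ifP => _; [ring|case: ifP=> _; [ring|done]]].
Qed.

Lemma ad3 (x y : V) : n7_bracket x (n7_bracket x (n7_bracket x y)) = 0.
Proof.
apply/rowP => k; rewrite !mxE !i7v //=.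
by case: ifP => _; [ring|case: ifP => _; [ring|case: ifP=> _; [ring|done]]].
Qed.

Lemma iter3 (x y : V) k : iter k.+3 (n7_bracket x) y = 0.
Proof.
elim: k => [|k IH]; first exact: ad3.
by rewrite iterS IH br0.
Qed.

Lemma Ad_expE (x y : V) :
  Ad_exp x y = y + n7_bracket x y + 2^-1 *: n7_bracket x (n7_bracket x y).
Proof.
rewrite /Ad_exp -(big_mkord xpredT (fun k => ((k`!)%:R)^-1 *: iter k (n7_bracket x) y)).
rewrite !big_nat_recl // big_geq // !iter3 !scaler0 !addr0 /=.
rewrite !factS fact0 /= invr1 !scale1r addrA.
done.
Qed.

Lemma sum7 (F : 'I_7 -> R) : \sum_(i < 7) F i =
  F (i7 0) + F (i7 1) + F (i7 2) + F (i7 3) + F (i7 4) + F (i7 5) + F (i7 6).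
Proof.
have -> : \sum_(i < 7) F i = \sum_(i < 7) F (i7 i).
  by apply: eq_bigr => i _; rewrite /i7 inord_val.
rewrite -(big_mkord xpredT (fun k => F (i7 k))) !big_nat_recl // big_geq //.
by rewrite addr0 !addrA.
Qed.

Definition cf (a f : V) (m : nat) : R :=
  match m with
  | 0%N => (f 0 (i7 0)) + (a 0 (i7 2)) * (f 0 (i7 4)) + (a 0 (i7 3)) * (f 0 (i7 5)) + (a 0 (i7 4)) * (f 0 (i7 6)) - ((a 0 (i7 0)) * (a 0 (i7 2)) + (a 0 (i7 1)) * (a 0 (i7 3))) * (f 0 (i7 6)) / 2
  | 1%N => (f 0 (i7 1)) + (a 0 (i7 3)) * (f 0 (i7 4)) - (a 0 (i7 2)) * (f 0 (i7 5)) + (a 0 (i7 5)) * (f 0 (i7 6)) + ((a 0 (i7 1)) * (a 0 (i7 2)) - (a 0 (i7 0)) * (a 0 (i7 3))) * (f 0 (i7 6)) / 2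
  | 2%N => (f 0 (i7 2)) - (a 0 (i7 0)) * (f 0 (i7 4)) + (a 0 (i7 1)) * (f 0 (i7 5)) + ((a 0 (i7 0)) ^+ 2 - (a 0 (i7 1)) ^+ 2) * (f 0 (i7 6)) / 2
  | 3%N => (f 0 (i7 3)) - (a 0 (i7 1)) * (f 0 (i7 4)) - (a 0 (i7 0)) * (f 0 (i7 5)) + (a 0 (i7 0)) * (a 0 (i7 1)) * (f 0 (i7 6))
  | 4%N => (f 0 (i7 4)) - (a 0 (i7 0)) * (f 0 (i7 6))
  | 5%N => (f 0 (i7 5)) - (a 0 (i7 1)) * (f 0 (i7 6))
  | _ => (f 0 (i7 6))
  end.

Lemma addE (A B : V) i : (A + B) 0 i = A 0 i + B 0 i. Proof. by rewrite mxE. Qed.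
Lemma oppE (A : V) i : (- A) 0 i = - A 0 i. Proof. by rewrite mxE. Qed.
Lemma sclE c (A : V) i : (c *: A) 0 i = c * A 0 i. Proof. by rewrite mxE. Qed.
Lemma dltE k m : (k < 7)%N -> (m < 7)%N ->
  ('e_(i7 m) : V) 0 (i7 k) = if k == m then 1 else 0.
Proof. by move=> ??; rewrite mxE i7eq //=; case: (k == m). Qed.
Lemma brE (x y : V) k : (k < 7)%N -> n7_bracket x y 0 (i7 k) =
  if k == 4%N then
       x 0 (i7 0) * y 0 (i7 2) - x 0 (i7 2) * y 0 (i7 0)
     + (x 0 (i7 1) * y 0 (i7 3) - x 0 (i7 3) * y 0 (i7 1))
     else if k == 5%N then
       x 0 (i7 0) * y 0 (i7 3) - x 0 (i7 3) * y 0 (i7 0)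
     - (x 0 (i7 1) * y 0 (i7 2) - x 0 (i7 2) * y 0 (i7 1))
     else if k == 6%N then
       x 0 (i7 0) * y 0 (i7 4) - x 0 (i7 4) * y 0 (i7 0)
     + (x 0 (i7 1) * y 0 (i7 5) - x 0 (i7 5) * y 0 (i7 1))
     else 0.
Proof. by move=> ?; rewrite mxE i7v. Qed.

Lemma coadE (a f : V) : coadjoint a f = \row_(j < 7) cf a f (val j).
Proof.
apply/rowP => j; rewrite !mxE.
have -> : j = i7 (val j) by rewrite /i7 inord_val.
rewrite i7v; last exact: ltn_ord.
case: j => m Hm /=.
rewrite /pairing sum7 Ad_expE.
rewrite !addE.
rewrite !sclE.
rewrite !brE //=.
rewrite !dltE //.
rewrite !oppE.
case: m Hm => [|[|[|[|[|[|[|m]]]]]]] Hm //; rewrite /cf /=; try (set c := (2:R)^-1; ring).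
by field.
Qed.

Lemma coadEk (a f : V) k : (k < 7)%N -> coadjoint a f 0 (i7 k) = cf a f k.
Proof. by move=> ?; rewrite coadE mxE i7v. Qed.

Definition J (f : V) : R * R * R :=
  (f 0 (i7 2) - (f 0 (i7 4) ^+ 2 - f 0 (i7 5) ^+ 2) / (2 * f 0 (i7 6)),
   f 0 (i7 3) - f 0 (i7 4) * f 0 (i7 5) / f 0 (i7 6), f 0 (i7 6)).

Lemma J_coad (a f : V) : f 0 (i7 6) != 0 -> J (coadjoint a f) = J f.
Proof.
move=> h; rewrite /J !coadEk // /cf /=.
congr (_, _, _); field; rewrite ?h //.
Qed.

Lemma zeroE i : (0 : V) 0 i = 0. Proof. by rewrite mxE. Qed.

Lemma coad0 (f : V) : coadjoint 0 f = f.
Proof.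
apply/rowP => j; have -> : j = i7 (val j) by rewrite /i7 inord_val.
rewrite coadEk; last exact: ltn_ord.
case: j => m Hm /=.
case: m Hm => [|[|[|[|[|[|[|m]]]]]]] Hm //; rewrite /cf /= !zeroE; ring.
Qed.
End Alg.
Arguments J {R}.

Require Import Defs.
From HB Require Import structures.
From mathcomp Require Import all_boot all_order all_algebra.
From mathcomp Require Import all_classical all_reals all_analysis.
From mathcomp Require Import ring lra.
Import Order.TTheory GRing.Theory Num.Theory.
Import numFieldNormedType.Exports.
Local Open Scope classical_set_scope.
Local Open Scope ring_scope.
Arguments J {R}.
Section Alg2.
Variable R : realType.
Notation V := 'rV[R]_7.

Definition wit (f g : V) : V := \row_(j < 7)
  (match val j with
   | 0%N => (f 0 (i7 4) - g 0 (i7 4)) / f 0 (i7 6)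
   | 1%N => (f 0 (i7 5) - g 0 (i7 5)) / f 0 (i7 6)
   | 4%N => (g 0 (i7 0) - f 0 (i7 0)) / f 0 (i7 6)
   | 5%N => (g 0 (i7 1) - f 0 (i7 1)) / f 0 (i7 6)
   | _ => 0 end).

Lemma witE (f g : V) k : (k < 7)%N -> wit f g 0 (i7 k) =
  (match k with
   | 0%N => (f 0 (i7 4) - g 0 (i7 4)) / f 0 (i7 6)
   | 1%N => (f 0 (i7 5) - g 0 (i7 5)) / f 0 (i7 6)
   | 4%N => (g 0 (i7 0) - f 0 (i7 0)) / f 0 (i7 6)
   | 5%N => (g 0 (i7 1) - f 0 (i7 1)) / f 0 (i7 6)
   | _ => 0 end).
Proof. by move=> ?; rewrite mxE i7v. Qed.

Lemma orbitE (f : V) : f 0 (i7 6) != 0 -> coad_orbit f = [set g | J g = J f].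
Proof.
move=> h; apply/seteqP; split => g /=.
  by move=> [x ->]; rewrite J_coad.
rewrite /J => -[e3 e4 e6].
have E3 : g 0 (i7 2) = f 0 (i7 2) - (f 0 (i7 4) ^+ 2 - f 0 (i7 5) ^+ 2) / (2 * f 0 (i7 6))
   + (g 0 (i7 4) ^+ 2 - g 0 (i7 5) ^+ 2) / (2 * g 0 (i7 6)) by rewrite -e3; ring.
have E4 : g 0 (i7 3) = f 0 (i7 3) - f 0 (i7 4) * f 0 (i7 5) / f 0 (i7 6)
   + g 0 (i7 4) * g 0 (i7 5) / g 0 (i7 6) by rewrite -e4; ring.
exists (wit f g).
apply/rowP => j; have -> : j = i7 (val j) by rewrite /i7 inord_val.
rewrite coadEk; last exact: ltn_ord.
case: j => m Hm /=.
case: m Hm => [|[|[|[|[|[|[|m]]]]]]] Hm //; rewrite /cf /= !witE //=.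
all: rewrite ?E3 ?E4 ?e6.
all: by field; rewrite ?h.
Qed.

Lemma in_orbit (f : V) : coad_orbit f f.
Proof. by exists 0; rewrite coad0. Qed.

Lemma orbit_eq (f g : V) : f 0 (i7 6) != 0 ->
  (coad_orbit g = coad_orbit f <-> g 0 (i7 6) != 0 /\ J g = J f).
Proof.
move=> h; split.
  move=> e; have : coad_orbit f g by rewrite -e; exact: in_orbit.
  rewrite orbitE // => /= eJ; split => //.
  by move: eJ; rewrite /J => -[_ _ ->].
move=> [hg eJ]; by rewrite (@orbitE g hg) (@orbitE f h) eJ.
Qed.

Lemma stdE (p : R * R * R) k : (k < 7)%N -> std_functional p 0 (i7 k) =
  if k == 2%N then p.1.1 else if k == 3%N then p.1.2
                else if k == 6%N then p.2 else 0.
Proof. by move=> ?; rewrite mxE i7v. Qed.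

Lemma std6 (p : R * R * R) : std_functional p 0 (i7 6) = p.2.
Proof. by rewrite stdE. Qed.

Lemma J_std (p : R * R * R) : J (std_functional p) = p.
Proof.
case: p => [[p1 p2] p3]; rewrite /J !stdE //=.
congr (_, _, _); rewrite ?expr0n /= ?mul0r ?mulr0 ?subrr ?mul0r ?subr0 ?invr0 ?mulr0 ?subr0 //.
Qed.
End Alg2.

Require Import Defs.
From HB Require Import structures.
From mathcomp Require Import all_boot all_order all_algebra.
From mathcomp Require Import all_classical all_reals all_analysis.
From mathcomp Require Import ring lra.
Import Order.TTheory GRing.Theory Num.Theory.
Import numFieldNormedType.Exports.
Local Open Scope classical_set_scope.
Local Open Scope ring_scope.
Arguments J {R}.
Section Top.
Variable R : realType.
Notation V := 'rV[R]_7.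

Lemma cPair {T : topologicalType} {U : topologicalType} (s : T -> R) (u : T -> U) x :
  {for x, continuous u} -> {for x, continuous s} ->
  {for x, continuous (fun g => (u g, s g))}.
Proof. move=> hu hs. exact: (cvg_pair hu hs). Qed.

Lemma cB {T : topologicalType} (s t : T -> R) x :
  {for x, continuous s} -> {for x, continuous t} ->
  {for x, continuous (fun g => s g - t g)}.
Proof. exact: continuousB. Qed.

Lemma cM {T : topologicalType} (s t : T -> R) x :
  {for x, continuous s} -> {for x, continuous t} ->
  {for x, continuous (fun g => s g * t g)}.
Proof. exact: continuousM. Qed.

Lemma cDv {T : topologicalType} (s t : T -> R) x : t x != 0 ->
  {for x, continuous s} -> {for x, continuous t} ->
  {for x, continuous (fun g => s g / t g)}.
Proof. move=> h hs ht; apply: cM => //; exact: continuousV. Qed.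

Lemma cX2 {T : topologicalType} (s : T -> R) x :
  {for x, continuous s} -> {for x, continuous (fun g => s g ^+ 2)}.
Proof.
move=> hs; have -> : (fun g => s g ^+ 2) = (fun g => s g * s g).
  by apply: funext => g; rewrite expr2.
exact: cM.
Qed.

Lemma cC {T : topologicalType} (c : R) x : {for x, continuous (fun _ : T => c)}.
Proof. exact: cst_continuous. Qed.

Lemma cProj i j : continuous (fun g : V => g i j).
Proof.
move=> g A /nbhs_ballP[e e0 eA]; apply/nbhs_ballP; exists e => // h [_ gh].
exact: eA.
Qed.

Lemma J_cont {f : V} : f 0 (i7 6) != 0 -> {for f, continuous J}.
Proof.
move=> h; rewrite /J.
apply: cPair; last exact: cProj.
apply: cPair.
  apply: cB; first exact: cProj.
  apply: cDv; first by rewrite mulf_neq0 // pnatr_eq0.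
    by apply: cB; apply: cX2; exact: cProj.
  by apply: cM; [exact: cC|exact: cProj].
apply: cB; first exact: cProj.
apply: cDv => //; last exact: cProj.
by apply: cM; exact: cProj.
Qed.

Lemma open_JB (B : set (R * R * R)) : open B ->
  open [set f : V | f 0 (i7 6) != 0 /\ B (J f)].
Proof.
move=> oB; rewrite openE => f [hf Bf].
have hB : nbhs (J f) B by apply: open_nbhs_nbhs; split.
have h1 : nbhs f (J @^-1` B) := J_cont hf _ hB.
have h2 : nbhs f [set g : V | g 0 (i7 6) != 0].
  have h0 : nbhs (f 0 (i7 6)) [set x : R | x != 0].
    by apply: open_nbhs_nbhs; split => //; exact: open_neq.
  exact: (cProj 0 (i7 6) f _ h0).
rewrite /interior; near=> g; split; near: g => //.
Unshelve. all: by end_near.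
Qed.

Lemma std_cont : continuous (@std_functional R).
Proof.
move=> p A /nbhs_ballP[e e0 eA]; apply/nbhs_ballP; exists e => // q [[b1 b2] b3].
apply: eA; split => // i j; rewrite !mxE.
case: ifP => _ //; case: ifP => _ //; case: ifP => _ //; exact: ballxx.
Qed.
End Top.

Require Import Defs.
From HB Require Import structures.
From mathcomp Require Import all_boot all_order all_algebra.
From mathcomp Require Import all_classical all_reals all_analysis.
From mathcomp Require Import ring lra.
Import Order.TTheory GRing.Theory Num.Theory.
Import numFieldNormedType.Exports.
Local Open Scope classical_set_scope.
Local Open Scope ring_scope.
Arguments J {R}.
Section Main.
Variable R : realType.
Notation V := 'rV[R]_7.

Definition UB (B : set (R * R * R)) : set (set V) :=
  [set O | exists f : V, f 0 (i7 6) != 0 /\ B (J f) /\ O = coad_orbit f].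

Lemma Phi_J (f : V) : f 0 (i7 6) != 0 -> Phi (J f) = coad_orbit f.
Proof.
move=> h; rewrite /Phi; apply/(@orbit_eq R f _ h); split.
  by rewrite std6.
by rewrite J_std.
Qed.

Lemma UB_Phi B O : UB B O <-> exists p, p.2 != 0 /\ B p /\ O = Phi p.
Proof.
split.
  move=> [f [h [Bf ->]]]; exists (J f); split => //; split => //.
  by rewrite Phi_J.
move=> [p [hp [Bp ->]]]; exists (std_functional p); rewrite std6 J_std.
by split.
Qed.

Lemma UB_sub B : UB B `<=` @Gamma2 R.
Proof. by move=> O [f [h [_ ->]]]; exists f. Qed.

Lemma UB_open B : open B -> @Gamma2_open R (UB B).
Proof.
move=> oB; exists (UB B); split; last by rewrite setIidl //; exact: UB_sub.
split; first by move=> O [f [_ [_ ->]]]; exists f.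
have -> : [set f : V | UB B (coad_orbit f)] = [set f : V | f 0 (i7 6) != 0 /\ B (J f)].
  apply/seteqP; split => f /=.
    move=> [g [hg [Bg e]]].
    have [hf eJ] := (@orbit_eq R g f hg).1 e.
    by rewrite eJ.
  by move=> [hf Bf]; exists f.
exact: open_JB.
Qed.

End Main.

Theorem mainTheorem2 (R : realType) :
  (* Gamma2 is Hausdorff in the relative quotient topology *)
  (forall O1 O2 : set 'rV[R]_7, Gamma2 O1 -> Gamma2 O2 -> O1 <> O2 ->
     exists W1 W2 : set (set 'rV[R]_7),
       [/\ Gamma2_open W1, Gamma2_open W2, W1 O1, W2 O2 & W1 `&` W2 = set0])
  /\
  (* Phi : R^2 x R^* -> Gamma2 is a homeomorphism *)
  [/\ (forall p, dom_R2Rstar p -> @Gamma2 R (Phi p)),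
      {in @dom_R2Rstar R &, injective (@Phi R)},
      (forall O, Gamma2 O -> exists2 p, @dom_R2Rstar R p & Phi p = O),
      (* continuity *)
      (forall W : set (set 'rV[R]_7), Gamma2_open W -> dom_open [set p | dom_R2Rstar p /\ W (Phi p)])
    & (* openness (continuity of the inverse) *)
      (forall A : set (R * R * R), dom_open A -> Gamma2_open (@Phi R @` A))].
Proof.
have G2 : forall p, dom_R2Rstar p -> @Gamma2 R (Phi p).
  by move=> p hp; exists (std_functional p); rewrite std6.
split.
  move=> _ _ [f1 [h1 ->]] [f2 [h2 ->]] ne.
  have nJ : J f1 != J f2.
    apply/eqP => eJ; apply: ne; apply/(@orbit_eq R f2 f1 h2); split => //.
  have := @norm_hausdorff R (R * R * R)%type.
  rewrite open_hausdorff => /(_ _ _ nJ) [[B1 B2]] [i1 i2] [Ho1 Ho2 dd].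
  have d := eqP dd.
  rewrite /= in i1 i2 Ho1 Ho2 d.
  exists (@UB R B1), (@UB R B2); split.
  - exact: UB_open.
  - exact: UB_open.
  - by exists f1; split => //; split => //; exact: set_mem.
  - by exists f2; split => //; split => //; exact: set_mem.
  apply/seteqP; split => // O [[g1 [hg1 [Bg1 e1]]] [g2 [hg2 [Bg2 e2]]]].
  have e : coad_orbit g1 = coad_orbit g2 by rewrite -e1 -e2.
  have [_ eJ] := (@orbit_eq R g2 g1 hg2).1 e.
  have : (B1 `&` B2) (J g1) by split => //; rewrite eJ.
  by rewrite d.
split => //.
- move=> p q /set_mem hp /set_mem hq e.
  have hq' : std_functional q 0 (i7 6) != 0 by rewrite std6.
  have [_ eJ] := (@orbit_eq R (std_functional q) (std_functional p) hq').1 e.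
  by rewrite !J_std in eJ.
- move=> O [f [h ->]]; exists (J f) => //; exact: Phi_J.
- move=> W [U [[Usub Uop] ->]].
  exists (@std_functional R @^-1` [set f | U (coad_orbit f)]); split.
    apply: open_comp => // x _; exact: std_cont.
  apply/seteqP; split => p /=.
    by move=> [hp [Up _]].
  by move=> [Up hp]; split => //; split => //; exact: G2.
- move=> _ [B [oB ->]].
  have -> : @Phi R @` (B `&` @dom_R2Rstar R) = @UB R B.
    apply/seteqP; split => O.
      move=> [p [Bp hp] <-]; apply/UB_Phi; exists p; split => //.
    move=> /UB_Phi [p [hp [Bp ->]]]; exists p => //.
  exact: UB_open.
Qed.
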